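(* Let $T$ be a simplex in $\mathbb{E}^3$ all four of whose facets have the same area. Then the axis of any circumscribing cylinder of $T$ of minimum radius is perpendicular to two opposite edges of $T$ (i.e. to two edges having no vertex in common).
   Context: A cylinder in $\mathbb{E}^3$ is the set of points at a fixed distance $\rho>0$ (its radius) from a line (its axis). A cylinder is circumscribing for a simplex if all vertices of the simplex lie on it. *)

(* Defs.v *)
From mathcomp Require Import all_boot all_order all_algebra.
From mathcomp Require Import reals.
Set Implicit Arguments. Unset Strict Implicit. Unset Printing Implicit Defensive.
Import Order.TTheory GRing.Theory Num.Theory.
Local Open Scope ring_scope.

Notation pt R := 'rV[R]_3.

Definition dot {R : realType} (u v : pt R) : R := \sum_(i < 3) u 0 i * v 0 i.
Definition enorm {R : realType} (u : pt R) : R := Num.sqrt (dot u u).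

Definition cross {R : realType} (u v : pt R) : pt R :=
  \row_(i < 3)
    (if i == 0 :> nat then u 0 1 * v 0 2 - u 0 2 * v 0 1
     else if i == 1 :> nat then u 0 2 * v 0 0 - u 0 0 * v 0 2
     else u 0 0 * v 0 1 - u 0 1 * v 0 0).

Definition tri_area {R : realType} (a b c : pt R) : R :=
  enorm (cross (b - a) (c - a)) / 2.

Definition is_simplex {R : realType} (a b c d : pt R) : Prop :=
  \det (col_mx (b - a) (col_mx (c - a) (d - a))) != 0.

Definition equal_facet_areas {R : realType} (a b c d : pt R) : Prop :=
  [/\ tri_area b c d = tri_area a c d,
      tri_area a c d = tri_area a b d &
      tri_area a b d = tri_area a b c].

(* Euclidean distance from x to the line {p + t u | t in R}, u <> 0
   (closed form of inf_t |x - (p + t u)|). *)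
Definition dist_line {R : realType} (p u x : pt R) : R :=
  Num.sqrt (dot (x - p) (x - p) - (dot (x - p) u) ^+ 2 / dot u u).

Definition circumscribing {R : realType} (a b c d p u : pt R) (rho : R) : Prop :=
  [/\ u != 0, 0 < rho &
      [/\ dist_line p u a = rho, dist_line p u b = rho,
          dist_line p u c = rho & dist_line p u d = rho]].

Definition min_circumscribing {R : realType} (a b c d p u : pt R) (rho : R) : Prop :=
  circumscribing a b c d p u rho /\
  forall (p' u' : pt R) (rho' : R), circumscribing a b c d p' u' rho' -> rho <= rho'.

Definition perp_two_opposite_edges {R : realType} (a b c d u : pt R) : Prop :=
  [\/ dot u (b - a) = 0 /\ dot u (d - c) = 0,
      dot u (c - a) = 0 /\ dot u (d - b) = 0 |
      dot u (d - a) = 0 /\ dot u (c - b) = 0].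

(* Main.v *)
Require Import Defs.
From mathcomp Require Import all_boot all_order all_algebra.
From mathcomp Require Import reals.
From mathcomp Require Import ring lra.
Import Order.TTheory GRing.Theory Num.Theory.
Local Open Scope ring_scope.
Lemma dotE (R : realType) (u v : pt R) : dot u v = u 0 0 * v 0 0 + u 0 1 * v 0 1 + u 0 2 * v 0 2.
Proof. rewrite /dot !big_ord_recr big_ord0 /= add0r. by congr (u 0 _ * v 0 _ + u 0 _ * v 0 _ + u 0 _ * v 0 _); apply/val_inj. Qed.
Lemma cr0 (R : realType) (u v : pt R) : cross u v 0 0 = u 0 1 * v 0 2 - u 0 2 * v 0 1.
Proof. by rewrite mxE. Qed.
Lemma cr1 (R : realType) (u v : pt R) : cross u v 0 1 = u 0 2 * v 0 0 - u 0 0 * v 0 2.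
Proof. by rewrite mxE. Qed.
Lemma cr2 (R : realType) (u v : pt R) : cross u v 0 2 = u 0 0 * v 0 1 - u 0 1 * v 0 0.
Proof. by rewrite mxE. Qed.
Section CM.
Variables (R : realType) (u v w : pt R).
Lemma cm0 j : col_mx u (col_mx v w) 0 j = u 0 j.
Proof. have -> : (0:'I_(1+(1+1))) = lshift (1+1) (0:'I_1) by apply/val_inj. by rewrite col_mxEu. Qed.
Lemma cm1 j : col_mx u (col_mx v w) 1 j = v 0 j.
Proof. have -> : (1:'I_(1+(1+1))) = rshift 1 (lshift 1 (0:'I_1)) by apply/val_inj. by rewrite col_mxEd col_mxEu. Qed.
Lemma cm2 j : col_mx u (col_mx v w) 2 j = w 0 j.
Proof. have -> : (2:'I_(1+(1+1))) = rshift 1 (rshift 1 (0:'I_1)) by apply/val_inj. by rewrite !col_mxEd. Qed.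
End CM.
Lemma det3E (R : comNzRingType) (M : 'M[R]_3) : \det M =
  M 0 0 * (M 1 1 * M 2 2 - M 1 2 * M 2 1)
  - M 0 1 * (M 1 0 * M 2 2 - M 1 2 * M 2 0)
  + M 0 2 * (M 1 0 * M 2 1 - M 1 1 * M 2 0).
Proof.
have -> : M = \matrix_(i, j) M (inord i) (inord j).
  by apply/matrixP => i j; rewrite mxE !inord_val.
rewrite (expand_det_row _ 0) !big_ord_recr big_ord0 /=.
rewrite /cofactor !(expand_det_row _ 0) !big_ord_recr big_ord0 /= /cofactor !det_mx11 !mxE /=.
rewrite !big_ord0.
rewrite /bump /= -[(1 %% 3)%N]/1%N -[((1 + 1) %% 3)%N]/2%N !expr0 !expr1 /=. ring.
Qed.
Lemma det_rows (R : realType) (u v w : pt R) : \det (col_mx u (col_mx v w)) = dot u (cross v w).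
Proof. rewrite (@det3E _ (col_mx u (col_mx v w))) !cm0 !cm1 !cm2 dotE !mxE /=. ring. Qed.
Section Geo.
Context {R : realType}.
Implicit Types (u v w x y z : pt R).

Lemma row3P u v : u 0 0 = v 0 0 -> u 0 1 = v 0 1 -> u 0 2 = v 0 2 -> u = v.
Proof.
move=> h0 h1 h2; apply/rowP => j; case: j => [[|[|[|//]]] Hj].
- by have -> : Ordinal Hj = 0 by apply/val_inj.
- by have -> : Ordinal Hj = 1 by apply/val_inj.
- by have -> : Ordinal Hj = 2 by apply/val_inj.
Qed.

Lemma dot_ge0 u : 0 <= dot u u.
Proof. by rewrite dotE; rewrite !addr_ge0 // sqr_ge0. Qed.

Lemma dot_eq0 u : dot u u = 0 -> u = 0.
Proof.
rewrite dotE => h.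
have h0 : u 0 0 = 0 by nra.
have h1 : u 0 1 = 0 by nra.
have h2 : u 0 2 = 0 by nra.
by apply: row3P; rewrite !mxE.
Qed.

Lemma lagrange y z : dot (cross y z) (cross y z) = dot y y * dot z z - (dot y z)^+2.
Proof. rewrite !dotE !mxE /=; ring. Qed.

Lemma dotZZ (k : R) v : dot (k *: v) (k *: v) = k^+2 * dot v v.
Proof. rewrite !dotE !mxE; ring. Qed.

Lemma crossYZ x y z : cross (cross z x) (cross x y) = dot x (cross y z) *: x.
Proof. apply: row3P; rewrite !dotE !mxE /=; ring. Qed.

Lemma key_alg x y z : dot x x = dot y y -> dot y y = dot z z ->
  dot z z = dot (x+y+z) (x+y+z) ->
  dot x x * dot (x+y+z) (x+y+z) - (dot x (x+y+z))^+2 = dot y y * dot z z - (dot y z)^+2.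
Proof.
move=> h1 h2 h3.
have HV : dot (x+y+z) (x+y+z) = dot x x + dot y y + dot z z + 2*(dot x y + dot x z + dot y z).
  by rewrite !dotE !mxE; ring.
have HXV : dot x (x+y+z) = dot x x + dot x y + dot x z by rewrite !dotE !mxE; ring.
have Hr : dot x x + dot x y + dot x z = - dot y z.
  lra.
rewrite HXV Hr -h3 -h2 -h1; ring.
Qed.

Lemma edge_eq x y z : dot x (cross y z) != 0 ->
  dot (cross y z) (cross y z) = dot (cross z x) (cross z x) ->
  dot (cross z x) (cross z x) = dot (cross x y) (cross x y) ->
  dot (cross x y) (cross x y) = dot (cross y z + cross z x + cross x y) (cross y z + cross z x + cross x y) ->
  dot x x = dot (z - y) (z - y).
Proof.
move=> hD h1 h2 h3.
set X := cross y z; set Y := cross z x; set Z := cross x y.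
set D := dot x (cross y z).
have e1 : D^+2 * dot x x = dot Y Y * dot Z Z - (dot Y Z)^+2.
  by rewrite -lagrange /Y /Z crossYZ dotZZ.
have e2 : D^+2 * dot (z - y) (z - y) = dot X X * dot (X+Y+Z) (X+Y+Z) - (dot X (X+Y+Z))^+2.
  rewrite -lagrange -dotZZ; congr (dot _ _); apply: row3P; rewrite /X /Y /Z /D !dotE !mxE /=; ring.
have : D^+2 * dot x x = D^+2 * dot (z - y) (z - y) by rewrite e1 e2 key_alg.
by move/mulfI; apply; rewrite expf_neq0.
Qed.

Lemma vert y f1 f2 f3 (s1 s2 s3 : R) :
  y = 4^-1 *: (s1 *: f1 + s2 *: f2 + s3 *: f3) ->
  s1^+2 = 1 -> s2^+2 = 1 -> s3^+2 = 1 ->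
  dot f1 f2 = 0 -> dot f1 f3 = 0 -> dot f2 f3 = 0 ->
  [/\ dot y y = (dot f1 f1 + dot f2 f2 + dot f3 f3) / 16,
      (dot y f1)^+2 = (dot f1 f1)^+2 / 16,
      (dot y f2)^+2 = (dot f2 f2)^+2 / 16 &
      (dot y f3)^+2 = (dot f3 f3)^+2 / 16].
Proof.
move=> -> h1 h2 h3 o12 o13 o23.
have E0 : dot (4^-1 *: (s1 *: f1 + s2 *: f2 + s3 *: f3)) (4^-1 *: (s1 *: f1 + s2 *: f2 + s3 *: f3))
  = (s1^+2 * dot f1 f1 + s2^+2 * dot f2 f2 + s3^+2 * dot f3 f3
     + 2 * (s1 * s2 * dot f1 f2 + s1 * s3 * dot f1 f3 + s2 * s3 * dot f2 f3)) / 16.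
  by rewrite !dotE !mxE; field.
have E1 : dot (4^-1 *: (s1 *: f1 + s2 *: f2 + s3 *: f3)) f1
  = (s1 * dot f1 f1 + s2 * dot f1 f2 + s3 * dot f1 f3) / 4.
  by rewrite !dotE !mxE; field.
have E2 : dot (4^-1 *: (s1 *: f1 + s2 *: f2 + s3 *: f3)) f2
  = (s1 * dot f1 f2 + s2 * dot f2 f2 + s3 * dot f2 f3) / 4.
  by rewrite !dotE !mxE; field.
have E3 : dot (4^-1 *: (s1 *: f1 + s2 *: f2 + s3 *: f3)) f3
  = (s1 * dot f1 f3 + s2 * dot f2 f3 + s3 * dot f3 f3) / 4.
  by rewrite !dotE !mxE; field.
rewrite E0 E1 E2 E3 o12 o13 o23; split.
- by rewrite h1 h2 h3; field.
- have -> : (dot f1 f1)^+2/16 = s1^+2 * ((dot f1 f1)^+2/16) by rewrite h1 mul1r.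
  by field.
- have -> : (dot f2 f2)^+2/16 = s2^+2 * ((dot f2 f2)^+2/16) by rewrite h2 mul1r.
  by field.
- have -> : (dot f3 f3)^+2/16 = s3^+2 * ((dot f3 f3)^+2/16) by rewrite h3 mul1r.
  by field.
Qed.

Lemma cyl_arg (g f x : pt R) (s : R) : dot f f != 0 -> dot (x-g) (x-g) = s ->
  (dot (x-g) f)^+2 = (dot f f)^+2/16 -> dist_line g f x = Num.sqrt (s - dot f f/16).
Proof. move=> hF h1 h2; rewrite /dist_line h1 h2; congr Num.sqrt; by field. Qed.

Lemma distQ (p u x : pt R) (rho : R) : u != 0 -> 0 < rho -> dist_line p u x = rho ->
  dot u u * dot (x-p) (x-p) - (dot (x-p) u)^+2 = rho^+2 * dot u u.
Proof.
move=> hu hr; rewrite /dist_line => hd.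
have hN : dot u u != 0 by apply: contra hu => /eqP/dot_eq0 ->.
set q := _ - _ in hd.
have hq : 0 <= q.
  rewrite leNgt; apply/negP => hq; move: hd; rewrite ltr0_sqrtr // => h0.
  by move: hr; rewrite -h0 ltxx.
have hq2 : q = rho^+2 by rewrite -hd sqr_sqrtr.
by rewrite -hq2 /q; field.
Qed.
End Geo.
Section Geo2.
Context {R : realType}.
Lemma area_eq (v w : pt R) : enorm v / 2 = enorm w / 2 -> dot v v = dot w w.
Proof.
move=> h.
have h' : enorm v = enorm w.
  by have := congr1 (fun t => t * 2) h; rewrite /= !divfK ?pnatr_eq0.
by apply/eqP; rewrite -eqr_sqrt ?dot_ge0 //; apply/eqP.
Qed.
Lemma cross_swap (v w : pt R) : dot (cross v w) (cross v w) = dot (cross w v) (cross w v).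
Proof. rewrite !dotE !mxE /=; ring. Qed.
Lemma dot0v (v : pt R) : dot 0 v = 0.
Proof. rewrite dotE !mxE; ring. Qed.
End Geo2.

Lemma le_sqrt_sq (R : realType) (r y : R) : 0 < r -> r <= Num.sqrt y -> r^+2 <= y.
Proof.
move=> hr h.
have hy : 0 <= y.
  rewrite leNgt; apply/negP => hy; move: h; rewrite ltr0_sqrtr // => h.
  by move: (lt_le_trans hr h); rewrite ltxx.
by rewrite -(ler_sqrt _ hy) sqrtr_sqr ger0_norm // ltW.
Qed.

Lemma step2 (R : realType) (a b c d p u : pt R) (rho : R) :
 dot (b-a) (cross (c-a) (d-a)) != 0 ->
 dot (a+b-c-d) (a-b+c-d) = 0 -> dot (a+b-c-d) (a-b-c+d) = 0 ->
 dot (a-b+c-d) (a-b-c+d) = 0 ->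
 min_circumscribing a b c d p u rho -> perp_two_opposite_edges a b c d u.
Proof.
set f1 := a+b-c-d; set f2 := a-b+c-d; set f3 := a-b-c+d.
move=> hs o12 o13 o23 [[hu hr [da db dc dd]] hmin].
set N := dot u u.
have hN : 0 < N.
  rewrite lt_def dot_ge0 andbT; apply: contra hu => /eqP/dot_eq0 ->; by [].
move: (distQ _ _ _ _ hu hr da) (distQ _ _ _ _ hu hr db) (distQ _ _ _ _ hu hr dc) (distQ _ _ _ _ hu hr dd) => Qa Qb Qc Qd.
set F1 := dot f1 f1; set F2 := dot f2 f2; set F3 := dot f3 f3.
set t1 := dot f1 u; set t2 := dot f2 u; set t3 := dot f3 u.
set del := dot f1 (cross f2 f3).
have hdel : del = -4 * dot (b-a) (cross (c-a) (d-a)).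
  by rewrite /del /f1 /f2 /f3 !dotE !mxE /=; ring.
have G3 : del^+2 = F1*F2*F3.
  have -> : del^+2 = F1*(F2*F3 - (dot f2 f3)^+2) - dot f1 f2 * (dot f1 f2 * F3 - dot f2 f3 * dot f1 f3)
      + dot f1 f3 * (dot f1 f2 * dot f2 f3 - F2 * dot f1 f3).
    by rewrite /del /F1 /F2 /F3 !dotE !mxE /=; ring.
  by rewrite o12 o13 o23; ring.
have hdel0 : del != 0 by rewrite hdel mulf_neq0 // oppr_eq0 pnatr_eq0.
have hF : F1 * F2 * F3 != 0 by rewrite -G3 expf_neq0.
have hF1 : 0 < F1 by rewrite lt_def dot_ge0 andbT; apply: contra hF => /eqP ->; rewrite !mul0r.
have hF2 : 0 < F2 by rewrite lt_def dot_ge0 andbT; apply: contra hF => /eqP ->; rewrite mulr0 mul0r.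
have hF3 : 0 < F3 by rewrite lt_def dot_ge0 andbT; apply: contra hF => /eqP ->; rewrite mulr0.
set eps := dot f1 (cross f2 u).
have G1 : eps^+2 = F1*F2*N - F1*t2^+2 - F2*t1^+2.
  have -> : eps^+2 = F1*F2*N + 2 * dot f1 f2 * t1 * t2 - F1*t2^+2 - F2*t1^+2 - N * (dot f1 f2)^+2.
    by rewrite /eps /F1 /F2 /N /t1 /t2 !dotE !mxE /=; ring.
  by rewrite o12; ring.
have G2 : eps * del = F1*F2*t3.
  have -> : eps * del = F1*(F2*t3 - dot f2 f3 * t2) - dot f1 f2 * (dot f1 f2 * t3 - dot f2 f3 * t1)
      + dot f1 f3 * (dot f1 f2 * t2 - F2 * t1).
    by rewrite /eps /del /F1 /F2 /t1 /t2 /t3 !dotE !mxE /=; ring.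
  by rewrite o12 o13 o23; ring.
have Pars : F3*(F1*F2*N - F1*t2^+2 - F2*t1^+2) = F1*F2*t3^+2.
  have hF12 : F1 * F2 != 0 by rewrite mulf_neq0 // gt_eqF.
  apply: (mulfI hF12).
  have : (eps * del)^+2 = eps^+2 * del^+2 by rewrite exprMn.
  rewrite G1 G2 G3 => h.
  by transitivity ((F1 * F2 * N - F1 * t2 ^+ 2 - F2 * t1 ^+ 2) * (F1 * F2 * F3)); [ring | rewrite -h; ring].
set g := 4^-1 *: (a+b+c+d).
have m1 : (-1 : R)^+2 = 1 by rewrite sqrrN expr1n.
have p1 : (1 : R)^+2 = 1 by rewrite expr1n.
have va : a - g = 4^-1 *: (1 *: f1 + 1 *: f2 + 1 *: f3).
  by apply: row3P; rewrite !mxE /=; field.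
have vb : b - g = 4^-1 *: (1 *: f1 + (-1) *: f2 + (-1) *: f3).
  by apply: row3P; rewrite !mxE /=; field.
have vc : c - g = 4^-1 *: ((-1) *: f1 + 1 *: f2 + (-1) *: f3).
  by apply: row3P; rewrite !mxE /=; field.
have vd : d - g = 4^-1 *: ((-1) *: f1 + (-1) *: f2 + 1 *: f3).
  by apply: row3P; rewrite !mxE /=; field.
have [na a1 a2 a3] := vert _ _ _ _ _ _ _ va p1 p1 p1 o12 o13 o23.
have [nb b1 b2 b3] := vert _ _ _ _ _ _ _ vb p1 m1 m1 o12 o13 o23.
have [nc c1 c2 c3] := vert _ _ _ _ _ _ _ vc m1 p1 m1 o12 o13 o23.
have [nd d1 d2 d3] := vert _ _ _ _ _ _ _ vd m1 m1 p1 o12 o13 o23.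
have nz : forall f : pt R, 0 < dot f f -> f != 0.
  by move=> f hf; apply: contraTneq hf => ->; rewrite dot0v ltxx.
have K1 : rho^+2 <= (F1+F2+F3)/16 - F1/16.
  apply: le_sqrt_sq => //; apply: (hmin g f1); split; first exact: (nz _ hF1).
    by rewrite sqrtr_gt0; lra.
  by split; apply: cyl_arg; rewrite ?gt_eqF.
have K2 : rho^+2 <= (F1+F2+F3)/16 - F2/16.
  apply: le_sqrt_sq => //; apply: (hmin g f2); split; first exact: (nz _ hF2).
    by rewrite sqrtr_gt0; lra.
  by split; apply: cyl_arg; rewrite ?gt_eqF.
have K3 : rho^+2 <= (F1+F2+F3)/16 - F3/16.
  apply: le_sqrt_sq => //; apply: (hmin g f3); split; first exact: (nz _ hF3).
    by rewrite sqrtr_gt0; lra.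
  by split; apply: cyl_arg; rewrite ?gt_eqF.
set h := g - p.
set S := dot h h * N - (dot h u)^+2.
have Sum : 4 * ((N * dot (a-p) (a-p) - (dot (a-p) u)^+2) + (N * dot (b-p) (b-p) - (dot (b-p) u)^+2)
   + (N * dot (c-p) (c-p) - (dot (c-p) u)^+2) + (N * dot (d-p) (d-p) - (dot (d-p) u)^+2))
   = 16 * S + (F1+F2+F3)*N - (t1^+2+t2^+2+t3^+2).
  by rewrite /S /h /g /N /F1 /F2 /F3 /t1 /t2 /t3 /f1 /f2 /f3 !dotE !mxE /=; field.
rewrite Qa Qb Qc Qd in Sum.
have Pz : F1*F2*F3*N - F2*F3*t1^+2 - F1*F3*t2^+2 - F1*F2*t3^+2 = 0.
  have -> : F1*F2*F3*N - F2*F3*t1^+2 - F1*F3*t2^+2 - F1*F2*t3^+2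
     = F3 * (F1*F2*N - F1*t2^+2 - F2*t1^+2) - F1*F2*t3^+2 by ring.
  by rewrite Pars subrr.
have P : F1*F2*F3*((F1+F2+F3)*N - (t1^+2+t2^+2+t3^+2) - 16*rho^+2*N)
   = F2*F3*t1^+2*(F2+F3 - 16*rho^+2) + F1*F3*t2^+2*(F1+F3 - 16*rho^+2)
     + F1*F2*t3^+2*(F1+F2 - 16*rho^+2)
     + (F1+F2+F3 - 16*rho^+2) * (F1*F2*F3*N - F2*F3*t1^+2 - F1*F3*t2^+2 - F1*F2*t3^+2).
  by ring.
rewrite Pz mulr0 addr0 in P.
have H0 : 0 <= (F1+F2+F3)*N - (t1^+2+t2^+2+t3^+2) - 16*rho^+2*N.
  have hFp : 0 < F1*F2*F3 by rewrite !mulr_gt0.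
  rewrite -(pmulr_rge0 _ hFp) P.
  have k1 : 0 <= F2+F3 - 16*rho^+2 by lra.
  have k2 : 0 <= F1+F3 - 16*rho^+2 by lra.
  have k3 : 0 <= F1+F2 - 16*rho^+2 by lra.
  have T : forall x y z k : R, 0 < x -> 0 < y -> 0 <= k -> 0 <= x*y*z^+2*k.
    move=> x y z k hx hy hk; apply: mulr_ge0 => //; apply: mulr_ge0; last exact: sqr_ge0.
    by apply: mulr_ge0; apply: ltW.
  by apply: addr_ge0; [apply: addr_ge0|]; apply: T.
have HS : S <= 0.
  have E : 16 * S + ((F1+F2+F3)*N - (t1^+2+t2^+2+t3^+2)) = 16 * rho^+2 * N.
    have -> : 16 * S + ((F1+F2+F3)*N - (t1^+2+t2^+2+t3^+2)) = 16 * S + (F1+F2+F3)*N - (t1^+2+t2^+2+t3^+2) by ring.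
    rewrite -Sum /N; ring.
  rewrite -E in H0.
  have E2 : (F1+F2+F3)*N - (t1^+2+t2^+2+t3^+2) - (16 * S + ((F1+F2+F3)*N - (t1^+2+t2^+2+t3^+2))) = - (16 * S) by ring.
  rewrite E2 oppr_ge0 in H0.
  by rewrite -(pmulr_rle0 _ (_ : 0 < 16)).
set w := N *: h - (dot h u) *: u.
have Ww : dot w w = N * S by rewrite /w /S /N !dotE !mxE /=; ring.
have hw : w = 0.
  apply: dot_eq0; apply/le_anti; rewrite dot_ge0 andbT Ww.
  by rewrite mulr_ge0_le0 // ltW.
have Dab : (N * dot (a-p) (a-p) - (dot (a-p) u)^+2) - (N * dot (b-p) (b-p) - (dot (b-p) u)^+2)
   = 2 * dot w (a-b) + N * (dot f1 f2 + dot f1 f3) / 4 - (t2+t3)*t1/4.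
  by rewrite /w /h /g /N /t1 /t2 /t3 /f1 /f2 /f3 !dotE !mxE /=; field.
have Dac : (N * dot (a-p) (a-p) - (dot (a-p) u)^+2) - (N * dot (c-p) (c-p) - (dot (c-p) u)^+2)
   = 2 * dot w (a-c) + N * (dot f1 f2 + dot f2 f3) / 4 - (t1+t3)*t2/4.
  by rewrite /w /h /g /N /t1 /t2 /t3 /f1 /f2 /f3 !dotE !mxE /=; field.
have Dad : (N * dot (a-p) (a-p) - (dot (a-p) u)^+2) - (N * dot (d-p) (d-p) - (dot (d-p) u)^+2)
   = 2 * dot w (a-d) + N * (dot f1 f3 + dot f2 f3) / 4 - (t1+t2)*t3/4.
  by rewrite /w /h /g /N /t1 /t2 /t3 /f1 /f2 /f3 !dotE !mxE /=; field.
rewrite Qa Qb hw dot0v o12 o13 subrr in Dab.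
rewrite Qa Qc hw dot0v o12 o23 subrr in Dac.
rewrite Qa Qd hw dot0v o13 o23 subrr in Dad.
have e1 : t1 * (t2 + t3) = 0 by nra.
have e2 : t2 * (t1 + t3) = 0 by nra.
have e3 : t3 * (t1 + t2) = 0 by nra.
have key : (t2 = 0 /\ t3 = 0) \/ (t1 = 0 /\ t3 = 0) \/ (t1 = 0 /\ t2 = 0).
  case: (t1 =P 0) => [z1|nz1].
    rewrite z1 add0r in e2; move/eqP: e2; rewrite mulf_eq0 => /orP[/eqP z2|/eqP z3].
      by right; right.
    by right; left.
  move/eqP: e1; rewrite mulf_eq0 (negPf (introN eqP nz1)) /= => /eqP e1.
  have z3 : t3 = - t2 by lra.
  rewrite z3 in e2 e3.
  case: (t2 =P 0) => [z2|nz2]; first by left; split; [|rewrite z3 z2 oppr0].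
  exfalso; apply: (nz2).
  have : t1 = t2.
    move/eqP: e2; rewrite mulf_eq0 (negPf (introN eqP nz2)) /= => /eqP ?; lra.
  move=> et; rewrite et in e3; nra.
have ub : dot u (b-a) = - (t2 + t3) / 2 by rewrite /t2 /t3 /f2 /f3 !dotE !mxE /=; field.
have udc : dot u (d-c) = (t3 - t2) / 2 by rewrite /t2 /t3 /f2 /f3 !dotE !mxE /=; field.
have uc : dot u (c-a) = - (t1 + t3) / 2 by rewrite /t1 /t3 /f1 /f3 !dotE !mxE /=; field.
have udb : dot u (d-b) = (t3 - t1) / 2 by rewrite /t1 /t3 /f1 /f3 !dotE !mxE /=; field.
have ud : dot u (d-a) = - (t1 + t2) / 2 by rewrite /t1 /t2 /f1 /f2 !dotE !mxE /=; field.
have ucb : dot u (c-b) = (t2 - t1) / 2 by rewrite /t1 /t2 /f1 /f2 !dotE !mxE /=; field.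
rewrite /perp_two_opposite_edges ub udc uc udb ud ucb.
case: key => [[-> ->]|[[-> ->]|[-> ->]]].
- by apply: Or31; split; ring.
- by apply: Or32; split; ring.
- by apply: Or33; split; ring.
Qed.

Theorem mainTheorem4 (R : realType) (a b c d : 'rV[R]_3) :
  is_simplex a b c d -> equal_facet_areas a b c d ->
  forall (p u : 'rV[R]_3) (rho : R),
    min_circumscribing a b c d p u rho ->
    perp_two_opposite_edges a b c d u.
Proof.
move=> hs [A1 A2 A3] p u rho hm.
rewrite /is_simplex det_rows in hs.
move: A1 A2 A3; rewrite /tri_area => /area_eq s1 /area_eq s2 /area_eq s3.
have hX : dot (cross (c-a) (d-a)) (cross (c-a) (d-a)) = dot (cross (d-a) (b-a)) (cross (d-a) (b-a))
  by rewrite s2 cross_swap.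
have hY : dot (cross (d-a) (b-a)) (cross (d-a) (b-a)) = dot (cross (b-a) (c-a)) (cross (b-a) (c-a))
  by rewrite -s3 cross_swap.
have hV : dot (cross (b-a) (c-a)) (cross (b-a) (c-a)) =
   dot (cross (c-a) (d-a) + cross (d-a) (b-a) + cross (b-a) (c-a))
       (cross (c-a) (d-a) + cross (d-a) (b-a) + cross (b-a) (c-a)).
  have -> : cross (c-a) (d-a) + cross (d-a) (b-a) + cross (b-a) (c-a) = cross (c - b) (d - b).
    by apply: row3P; rewrite !mxE /=; ring.
  by rewrite s1 s2 s3.
have E1 := edge_eq _ _ _ hs hX hY hV.
have E2 : dot (c-a) (c-a) = dot ((b-a) - (d-a)) ((b-a) - (d-a)).
  apply: edge_eq.
  - by move: hs; rewrite !dotE !mxE /= => hs; apply: contra hs => /eqP hs; apply/eqP; rewrite -hs; ring.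
  - exact: hY.
  - exact: (esym (etrans hX hY)).
  - apply: (etrans hX); apply: (etrans hY); apply: (etrans hV).
    congr dot; apply: row3P; rewrite !mxE /=; ring.
have E3 : dot (d-a) (d-a) = dot ((c-a) - (b-a)) ((c-a) - (b-a)).
  apply: edge_eq.
  - by move: hs; rewrite !dotE !mxE /= => hs; apply: contra hs => /eqP hs; apply/eqP; rewrite -hs; ring.
  - exact: (esym (etrans hX hY)).
  - exact: hX.
  - apply: (etrans hY); apply: (etrans hV).
    congr dot; apply: row3P; rewrite !mxE /=; ring.
pose f1 := a + b - c - d; pose f2 := a - b + c - d; pose f3 := a - b - c + d.
have o23 : dot f2 f3 = 0.
  have -> : dot f2 f3 = dot (b-a) (b-a) - dot ((d-a) - (c-a)) ((d-a) - (c-a))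
    by rewrite /f2 /f3 !dotE !mxE /=; ring.
  by rewrite E1 subrr.
have o13 : dot f1 f3 = 0.
  have -> : dot f1 f3 = dot (c-a) (c-a) - dot ((b-a) - (d-a)) ((b-a) - (d-a))
    by rewrite /f1 /f3 !dotE !mxE /=; ring.
  by rewrite E2 subrr.
have o12 : dot f1 f2 = 0.
  have -> : dot f1 f2 = dot (d-a) (d-a) - dot ((c-a) - (b-a)) ((c-a) - (b-a))
    by rewrite /f1 /f2 !dotE !mxE /=; ring.
  by rewrite E3 subrr.
exact: (@step2 R a b c d p u rho hs o12 o13 o23 hm).
Qed.
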